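(* Assume Setup (S) and the completion data (C). Then for every $n\ge 1$, $\Phi_n$ maps $\mathbb{Z}^{n+1}$ injectively into $C(X_{min},G)$, and $\Phi_{n+1}\circ\phi_{n*}=\Phi_n$, where $\phi_{n*}:\mathbb{Z}^{n+1}\to\mathbb{Z}^{n+2}$ is multiplication by $\overline{A}_{n,n+1}$. Consequently there is an injective group homomorphism $\Psi:K_0(\mathfrak{A})=\varinjlim(\mathbb{Z}^{n+1},\phi_{n*})\to C(X_{min},G)$ with $\Psi\circ\iota_n=\Phi_n$ ($\iota_n$ the canonical maps into the limit), and $\Psi$ sends the order unit $[1_{\mathfrak{A}}]$ to $\chi_{X_{min}}$.
   Context: Setup (S): Let $\mathfrak{A}=\varinjlim(\mathfrak{A}_n,\phi_n)$ be an AF C$^*$-algebra with $\mathfrak{A}_0=\mathbb{C}$, $\mathfrak{A}_n$ having exactly $n+1$ summands, $\phi_n$ unital injective $*$-homomorphisms with multiplicity matrices $\overline{A}_{n,n+1}\in M_{n+2,n+1}(\mathbb{N})$ ($(i,j)$ entry = multiplicity of summand $j$ of $\mathfrak{A}_n$ in summand $i$ of $\mathfrak{A}_{n+1}$), each of rank $n+1$. The Bratteli diagram has vertices $v(i,n)$, $1\le i\le n+1$, and $(\overline{A}_{n,n+1})_{ij}$ edges from $v(j,n)$ to $v(i,n+1)$. A minimal reduction is a subgraph with the same vertices, obtained by deleting edges only, in which for all $n\ge 0$ each vertex at level $n+1$ receives exactly one edge from level $n$ and each vertex at level $n$ emits at least one edge to level $n+1$. Fix a minimal reduction. Then for each $n\ge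 1$ there are unique $1\le r'_n<r_n\le n+1$ and $1\le a_n\le n$ such that $v(r'_n,n)$ and $v(r_n,n)$ are the two vertices joined to $v(a_n,n-1)$, every other vertex of level $n-1$ being joined to exactly one vertex of level $n$; set $r_0=1$. $X_{min}$ is the set of infinite paths $(v(i_n,n))_{n\ge0}$, $i_0=1$, in the minimal reduction, with the topology having as clopen basis the nonempty sets $B(i,n)=\{\text{paths with }i_n=i\}$; it is a compact metrizable totally disconnected space. Define the linear map $R_n:\mathbb{C}^{n+1}\to C(X_{min},\mathbb{C})$ by $R_n(\alpha_1,\dots,\alpha_{n+1})=\sum_{l=0}^n\alpha_{l+1}\chi_{B(r_l,l)}$. Completion data (C): $K_0(\mathfrak{A}_n)$ is identified with $\mathbb{Z}^{n+1}$ (column vectors, positive cone $\mathbb{Z}_+^{n+1}$), $K_0(\phi_n)=\phi_{n*}$ is multiplication by $\overline{A}_{n,n+1}$, and $K_0(\mathfrak{A})=\varinjlim(\mathbb{Z}^{n+1},\phi_{n*})$ with order unit the image of $1\in\mathbb{Z}=K_0(\mathfrak{A}_0)$. For each $n\ge 0$ choose a column $c_n\in\mathbb{Z}^{n+2}$ such that $A_{n,n+1}=[\,\overline{A}_{n,n+1}\mid c_n\,]\in M_{n+2}(\mathbb{Z})$ is invertible. Put $A_n=(A_{0,1}^{-1}\oplus I_{n-1})(A_{1,2}^{-1}\oplus I_{n-2})\cdots(A_{n-2,n-1}^{-1}\oplus I_1)A_{n-1,n}^{-1}$ for $n\ge1$ (so $A_1=A_{0,1}^{-1}$), let $G=\bigcup_{n\ge1}\{a/\det(A_n^{-1}):a\in\mathbb{Z}\}\subseteq\mathbb{Q}$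 with the discrete topology, and $\Phi_n=R_n\circ A_n$ restricted to $\mathbb{Z}^{n+1}$. *)

(* Defs.v *)
From mathcomp Require Import all_boot all_order all_algebra.
Unset Printing Implicit Defensive.
Import Order.TTheory GRing.Theory Num.Theory.
Local Open Scope ring_scope.

(* Conventions: everything is 0-indexed.  Vertex v(i,n) (1 <= i <= n+1) is
   the ordinal (i-1) : 'I_(n+1).  Abar n : 'M_(n+2, n+1) is the multiplicity
   matrix \overline{A}_{n,n+1};  c n is the extra column c_n;
   parent n : 'I_(n+2) -> 'I_(n+1) describes the minimal reduction:
   the unique edge received by v(i,n+1) comes from v(parent n i, n). *)

Section AF.
Variable Abar : forall n : nat, 'M[int]_(n.+2, n.+1).
Variable c : forall n : nat, 'cV[int]_(n.+2).
Variable parent : forall n : nat, 'I_n.+2 -> 'I_n.+1.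

Definition Afull (n : nat) : 'M[int]_(n.+2) :=
  castmx (erefl n.+2, addn1 n.+1) (row_mx (Abar n) (c n)).

Definition Ainv (n : nat) : 'M[rat]_(n.+2) := invmx (map_mx intr (Afull n)).

(* A_n = (A_{0,1}^{-1} (+) I_{n-1}) ... (A_{n-2,n-1}^{-1} (+) I_1) A_{n-1,n}^{-1},
   written recursively: A_0 = I_1, A_{n+1} = (A_n (+) I_1) A_{n,n+1}^{-1}. *)
Fixpoint Aseq (n : nat) : 'M[rat]_(n.+1) :=
  match n return 'M[rat]_(n.+1) with
  | 0 => 1%:M
  | m.+1 => castmx (addn1 m.+1, addn1 m.+1)
              (block_mx (Aseq m) (0 : 'M_(m.+1, 1)) (0 : 'M_(1, m.+1)) (1%:M : 'M_1))
            *m Ainv m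
  end.

Definition inG (q : rat) : Prop :=
  exists n : nat, (1 <= n)%N /\
    exists a : int, q = a%:~R / \det (invmx (Aseq n)).

Record Xmin := MkXmin {
  pth : forall m : nat, 'I_m.+1;
  pth_ok : forall m : nat, parent m (pth m.+1) = pth m }.

(* r_0 = v(1,0); for n >= 1, r_n is the larger of the two level-n vertices
   sharing a parent (the unique vertex having a smaller sibling). *)
Definition rvert (n : nat) : 'I_n.+1 :=
  match n return 'I_n.+1 with
  | 0 => ord0
  | m.+1 => odflt ord0
      [pick i : 'I_m.+2 | [exists j : 'I_m.+2, (j < i)%N && (parent m j == parent m i)]]
  end.

Definition chiB (l : nat) (x : Xmin) : rat := ((pth x l == rvert l) : nat)%:R.

Definition Phi (n : nat) (v : 'cV[int]_n.+1) (x : Xmin) : rat :=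
  \sum_(l < n.+1) (Aseq n *m map_mx intr v) l ord0 * chiB l x.

(* f belongs to C(X_min, G), G discrete: f takes values in G and is locally
   constant w.r.t. the clopen basis {B(i,n)}. *)
Definition in_CXG (f : Xmin -> rat) : Prop :=
  (forall x, inG (f x)) /\
  (forall x, exists n : nat, forall y, pth y n = pth x n -> f y = f x).

End AF.

Fixpoint phi_iter (Abar : forall n : nat, 'M[int]_(n.+2, n.+1)) (n k : nat)
  {struct k} : 'cV[int]_n.+1 -> 'cV[int]_(k + n).+1 :=
  match k return 'cV[int]_n.+1 -> 'cV[int]_(k + n).+1 with
  | 0 => fun v => v
  | k'.+1 => fun v => Abar (k' + n)%N *m phi_iter Abar n k' v
  end.

(* Main.v *)
Require Import Defs.
From mathcomp Require Import all_boot all_order all_algebra.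
From Stdlib Require Import FunctionalExtensionality ClassicalEpsilon.
Import Order.TTheory GRing.Theory Num.Theory.
Local Open Scope ring_scope.

Lemma castmx_mulmx (R : pzRingType) m n p (e : m = n) (A : 'M[R]_m) (B : 'M[R]_(m, p)) :
  castmx (e, e) A *m castmx (e, erefl) B = castmx (e, erefl) (A *m B).
Proof. by case: n / e; rewrite !castmx_id. Qed.

Lemma castmx_mulmx2 (R : pzRingType) m n p q (e : m = n) (A : 'M[R]_(p, m)) (B : 'M[R]_(m, q)) :
  castmx (erefl, e) A *m castmx (e, erefl) B = A *m B.
Proof. by case: n / e; rewrite !castmx_id. Qed.

Lemma castmx_mulmx3 (R : pzRingType) m n (e : m = n) (A B : 'M[R]_m) :
  castmx (e, e) A *m castmx (e, e) B = castmx (e, e) (A *m B).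
Proof. by case: n / e; rewrite !castmx_id. Qed.

Lemma castmx_1 (R : pzRingType) m n (e : m = n) :
  castmx (e, e) (1%:M : 'M[R]_m) = 1%:M.
Proof. by case: n / e; rewrite !castmx_id. Qed.

Lemma castmx_colE_u (R : Type) k K (e : (k + 1)%N = K) (u : 'M[R]_(k, 1)) z
   (i : 'I_K) (i' : 'I_k) : val i = val i' ->
  castmx (e, erefl) (col_mx u z) i ord0 = u i' ord0.
Proof.
move=> h; rewrite castmxE /= cast_ord_id.
rewrite (_ : cast_ord _ i = lshift 1 i'); first by rewrite col_mxEu.
by apply: val_inj; rewrite /= h.
Qed.

Lemma castmx_colE_d (R : Type) k K (e : (k + 1)%N = K) (u : 'M[R]_(k, 1)) (z : 'M[R]_(1,1))
   (i : 'I_K) : val i = k ->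
  castmx (e, erefl) (col_mx u z) i ord0 = z ord0 ord0.
Proof.
move=> h; rewrite castmxE /= cast_ord_id.
rewrite (_ : cast_ord _ i = rshift k ord0); first by rewrite col_mxEd.
by apply: val_inj; rewrite /= h addn0.
Qed.
Section Paths.
Variable parent : forall n : nat, 'I_n.+2 -> 'I_n.+1.
Hypothesis Hemit : forall n (j : 'I_n.+1), exists i : 'I_n.+2, parent n i = j.

Definition child k (j : 'I_k.+1) : 'I_k.+2 := odflt ord0 [pick i | parent k i == j].

Lemma parent_child k j : parent k (child k j) = j.
Proof.
rewrite /child; case: pickP => [i /eqP //|H].
by have [i Hi] := Hemit k j; move: (H i); rewrite Hi eqxx.
Qed.

Definition parentN k (j : nat) : nat := parent k (inord j).
Definition childN k (j : nat) : nat := child k (inord j).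

Fixpoint upN d l j := match d with 0 => j | d'.+1 => parentN l (upN d' l.+1 j) end.
Fixpoint downN m i d := match d with 0 => i | d'.+1 => childN (d' + m) (downN m i d') end.

Definition Pf m i l := if (l <= m)%N then upN (m - l) l i else downN m i (l - m).

Lemma downN_lt m i d : (i < m.+1)%N -> (downN m i d < (d + m).+1)%N.
Proof. by case: d => [//|d] /= _; rewrite /childN ltn_ord. Qed.

Lemma parent_childN l j : (j < l.+1)%N -> parentN l (childN l j) = j.
Proof. by move=> h; rewrite /parentN /childN inord_val parent_child inordK. Qed.

Lemma Pf_lt m (i : 'I_m.+1) l : (Pf m i l < l.+1)%N.
Proof.
rewrite /Pf; case: ifP => hl.
  case E: (m - l)%N => [|d] /=.
    have -> : l = m by apply/eqP; rewrite eqn_leq hl -subn_eq0 E.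
    exact: ltn_ord.
  by rewrite /parentN ltn_ord.
have hml : (m <= l)%N by rewrite ltnW // ltnNge hl.
by have := @downN_lt m i (l - m) (ltn_ord i); rewrite subnK.
Qed.

Lemma Pf_ok m (i : 'I_m.+1) l : parentN l (Pf m i l.+1) = Pf m i l.
Proof.
rewrite /Pf; case: (ltngtP l m) => h.
- by rewrite -(subnSK h) [RHS]/=.
- rewrite (subSn (ltnW h)) /= subnK ?(ltnW h) // parent_childN //.
  by have := @downN_lt m i (l - m) (ltn_ord i); rewrite subnK // ltnW.
- by rewrite h subnn subSn // subnn /= add0n parent_childN.
Qed.

Arguments Pf_lt {m}.
Arguments Pf_ok {m}.

Definition mkpath m (i : 'I_m.+1) : Xmin parent.
Proof.
refine (MkXmin parent (fun l => Ordinal (Pf_lt i l)) _).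
move=> l; apply: val_inj => /=.
rewrite -(Pf_ok i l) /parentN; congr (val (parent l _)).
by apply: val_inj; rewrite /= inordK // Pf_lt.
Defined.
Arguments mkpath {m}.

Lemma mkpathP m (i : 'I_m.+1) : pth parent (mkpath i) m = i.
Proof. by apply: val_inj => /=; rewrite /Pf leqnn subnn. Qed.

Lemma path_ex m (i : 'I_m.+1) : exists x : Xmin parent, pth parent x m = i.
Proof. by exists (mkpath i); apply: mkpathP. Qed.

Lemma pth_prefix (x y : Xmin parent) d l :
  pth parent x (d + l) = pth parent y (d + l) -> pth parent x l = pth parent y l.
Proof.
elim: d => [//|d IH] h; apply: IH.
by rewrite -(pth_ok parent x (d + l)) -(pth_ok parent y (d + l)); congr (parent _ _).
Qed.

Arguments pth_prefix {x y} d {l}.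
Lemma pth_prefix_le (x y : Xmin parent) m l : (l <= m)%N ->
  pth parent x m = pth parent y m -> pth parent x l = pth parent y l.
Proof.
move=> hl; rewrite -(subnK hl) => h; exact: (pth_prefix _ h).
Qed.

Lemma rvert_sib m : exists j : 'I_m.+2, j != rvert parent m.+1 /\
   parent m j = parent m (rvert parent m.+1).
Proof.
rewrite /=; case: pickP => [i /existsP [j /andP [ji /eqP pj]]|H] /=.
  by exists j; split => //; rewrite neq_ltn ji.
exfalso.
have inj : injective (parent m).
  move=> i j e; case: (ltngtP i j) => h.
  - by move: (H j) => /negbT /existsPn /(_ i); rewrite h e eqxx.
  - by move: (H i) => /negbT /existsPn /(_ j); rewrite h e eqxx.
  - exact: val_inj.
by have := leq_card _ inj; rewrite !card_ord ltnn.
Qed.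

End Paths.
Section Mat.
Variable Abar : forall n : nat, 'M[int]_(n.+2, n.+1).
Variable c : forall n : nat, 'cV[int]_(n.+2).
Variable parent : forall n : nat, 'I_n.+2 -> 'I_n.+1.
Hypothesis Hemit : forall n (j : 'I_n.+1), exists i : 'I_n.+2, parent n i = j.
Hypothesis Hinv : forall n, \det (Afull Abar c n) != 0.

Local Notation ir := (map_mx (intr : int -> rat)).

Lemma Afull_unit n : ir (Afull Abar c n) \in unitmx.
Proof. by rewrite unitmxE unitfE det_map_mx intr_eq0 Hinv. Qed.

Lemma Aseq_step n (v : 'cV[int]_n.+1) :
  Aseq Abar c n.+1 *m ir (Abar n *m v) =
  castmx (addn1 n.+1, erefl) (col_mx (Aseq Abar c n *m ir v) 0).
Proof.
have e1 : ir (Abar n *m v) = ir (Afull Abar c n) *m castmx (addn1 n.+1, erefl) (col_mx (ir v) 0).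
  rewrite /Afull map_castmx map_row_mx castmx_mulmx2 mul_row_col mulmx0 addr0.
  by rewrite map_mxM.
rewrite e1 /= -mulmxA (mulmxA (Ainv _ _ _)) /Ainv mulVmx ?Afull_unit //.
rewrite mul1mx.
by rewrite castmx_mulmx mul_block_col !mulmx0 mul0mx !addr0.
Qed.


Lemma Phi_step n v x : Phi Abar c parent n.+1 (Abar n *m v) x = Phi Abar c parent n v x.
Proof.
rewrite /Phi big_ord_recr /= Aseq_step (@castmx_colE_d _ _ _ _ _ _ ord_max) // mxE mul0r addr0.
by apply: eq_bigr => i _; rewrite (@castmx_colE_u _ _ _ _ _ _ _ i).
Qed.

Fixpoint Mint n : 'M[int]_n.+1 := match n with
  | 0 => 1%:M
  | m.+1 => Afull Abar c m *m castmx (addn1 m.+1, addn1 m.+1) (block_mx (Mint m) 0 0 1%:M)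
  end.

Lemma Mint_Aseq n : ir (Mint n) *m Aseq Abar c n = 1%:M.
Proof.
elim: n => [|n IH]; first by rewrite /= map_mx1 mul1mx.
change (Mint n.+1) with (Afull Abar c n *m castmx (addn1 n.+1, addn1 n.+1) (block_mx (Mint n) 0 0 1%:M)).
change (Aseq Abar c n.+1) with (castmx (addn1 n.+1, addn1 n.+1)
              (block_mx (Aseq Abar c n) (0 : 'M_(n.+1, 1)) (0 : 'M_(1, n.+1)) (1%:M : 'M_1))
            *m Ainv Abar c n).
rewrite map_mxM; set AF := ir (Afull _ _ _).
rewrite map_castmx map_block_mx map_mx1 !map_mx0 -mulmxA (mulmxA (castmx _ _)).
rewrite castmx_mulmx3 mulmx_block IH !mulmx0 !mul0mx !addr0 !add0r mul1mx.
by rewrite -scalar_mx_block castmx_1 mul1mx /Ainv mulmxV // Afull_unit.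
Qed.

Lemma Aseq_unit n : Aseq Abar c n \in unitmx.
Proof. by have [_ ->] := mulmx1_unit (Mint_Aseq n). Qed.

Lemma Aseq_inv n : invmx (Aseq Abar c n) = ir (Mint n).
Proof.
by rewrite -[RHS]mulmx1 -(mulmxV (Aseq_unit n)) mulmxA Mint_Aseq mul1mx.
Qed.


Lemma Phi_add n u v x : Phi Abar c parent n (u + v) x = Phi Abar c parent n u x + Phi Abar c parent n v x.
Proof.
rewrite /Phi -big_split /=; apply: eq_bigr => i _.
by rewrite map_mxD mulmxDr mxE mulrDl.
Qed.

Lemma Phi_sub n u v x : Phi Abar c parent n (u - v) x = Phi Abar c parent n u x - Phi Abar c parent n v x.
Proof.
rewrite /Phi -sumrB /=; apply: eq_bigr => i _.
by rewrite map_mxB mulmxBr !mxE mulrBl.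
Qed.

Lemma Phi0 n x : Phi Abar c parent n 0 x = 0.
Proof. by have := Phi_sub n 0 0 x; rewrite subr0 subrr. Qed.

Lemma Phi_loc n v x (y : Xmin parent) : pth parent y n = pth parent x n ->
  Phi Abar c parent n v y = Phi Abar c parent n v x.
Proof.
move=> h; rewrite /Phi; apply: eq_bigr => i _; congr (_ * _).
by rewrite /chiB (@pth_prefix_le parent y x n i _ h) // -ltnS.
Qed.

Lemma Phi_G n v x : (1 <= n)%N -> inG Abar c (Phi Abar c parent n v x).
Proof.
move=> hn; exists n; split => //.
exists (\sum_(l < n.+1) (\adj (Mint n) *m v) l ord0 * ((pth parent x l == rvert parent l) : nat)%:Z).
rewrite Aseq_inv /Phi rmorph_sum mulr_suml; apply: eq_bigr => l _.
have U : ir (Mint n) \in unitmx by rewrite -Aseq_inv unitmx_inv Aseq_unit.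
rewrite -[Aseq Abar c n]invmxK Aseq_inv {1}/invmx U -map_mx_adj -scalemxAl -map_mxM mxE mxE.
rewrite det_map_mx /chiB rmorphM /=.
by rewrite -mulrA [LHS]mulrC.
Qed.


Lemma indep_aux (F : nat -> rat) k :
  (forall x, \sum_(l < k.+1) F l * chiB parent l x = 0) -> forall l, (l <= k)%N -> F l = 0.
Proof.
elim: k => [|k IH] H l hl.
  have [x _] := path_ex _ Hemit _ (ord0 : 'I_1).
  move: hl; rewrite leqn0 => /eqP ->.
  have := H x; rewrite big_ord1 /chiB [pth _ _ _]ord1 eqxx /= mulr1.
  by [].
have Fk : F k.+1 = 0.
  have [j [hj pj]] := rvert_sib parent k.
  have [x hx] := path_ex _ Hemit _ (rvert parent k.+1).
  have [y hy] := path_ex _ Hemit _ j.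
  have hxy : pth parent x k = pth parent y k.
    by rewrite -(pth_ok parent x k) -(pth_ok parent y k) hx hy pj.
  have Hx := H x; have Hy := H y.
  rewrite big_ord_recr /= in Hx; rewrite big_ord_recr /= in Hy.
  have ES : \sum_(i < k.+1) F (widen_ord (leqnSn k.+1) i) * chiB parent (widen_ord (leqnSn k.+1) i) x
          = \sum_(i < k.+1) F (widen_ord (leqnSn k.+1) i) * chiB parent (widen_ord (leqnSn k.+1) i) y.
    apply: eq_bigr => i _; congr (_ * _).
    by rewrite /chiB (@pth_prefix_le parent x y k i _ hxy) // -ltnS.
  move: Hx Hy; rewrite ES /chiB hx hy eqxx (negbTE hj) /= mulr1 mulr0 addr0 => Hx Hy.
  by move: Hx; rewrite Hy add0r.
move: hl; rewrite leq_eqVlt => /orP [/eqP -> //| hl].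
apply: IH => // x.
by move: (H x); rewrite big_ord_recr /= Fk mul0r addr0.
Qed.

Lemma indep n (w : 'cV[rat]_n.+1) :
  (forall x, \sum_(l < n.+1) w l ord0 * chiB parent l x = 0) -> w = 0.
Proof.
move=> H; apply/matrixP => i j; rewrite ord1 mxE.
have := @indep_aux (fun l => w (inord l) ord0) n _ i (ltn_ord i).
rewrite inord_val; apply => x; rewrite -[RHS](H x); apply: eq_bigr => l _.
by rewrite inord_val.
Qed.

Lemma Phi_inj n : injective (Phi Abar c parent n).
Proof.
move=> u v e.
have H : forall x, \sum_(l < n.+1) (Aseq Abar c n *m ir (u - v)) l ord0 * chiB parent l x = 0.
  by move=> x; have := Phi_sub n u v x; rewrite e subrr.
have /(congr1 (mulmx (ir (Mint n)))) := @indep _ _ H.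
rewrite mulmxA Mint_Aseq mul1mx mulmx0 => h.
apply/eqP; rewrite -subr_eq0; apply/eqP/matrixP => i j.
have := congr1 (fun M : 'M[rat]_(n.+1,1) => M i j) h; rewrite !mxE => /eqP; rewrite intr_eq0 => /eqP.
by [].
Qed.

End Mat.

Theorem mainTheorem9
  (Abar : forall n : nat, 'M[int]_(n.+2, n.+1))
  (c : forall n : nat, 'cV[int]_(n.+2))
  (parent : forall n : nat, 'I_n.+2 -> 'I_n.+1)
  (* multiplicities are natural numbers *)
  (HAnat : forall n i j, 0 <= Abar n i j)
  (* each Abar_{n,n+1} has rank n+1 *)
  (HArank : forall n, \rank (map_mx intr (Abar n) : 'M[rat]_(n.+2, n.+1)) = n.+1)
  (* minimal reduction: v(i,n+1) receives exactly one edge, from v(parent n i, n),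
     which is an edge of the Bratteli diagram ... *)
  (Hedge : forall n (i : 'I_n.+2), 0 < Abar n i (parent n i))
  (* ... and every vertex of level n emits at least one edge *)
  (Hemit : forall n (j : 'I_n.+1), exists i : 'I_n.+2, parent n i = j)
  (* A_{n,n+1} = [Abar_{n,n+1} | c_n] is invertible *)
  (Hinv : forall n, \det (Afull Abar c n) != 0) :
  (forall n : nat, (1 <= n)%N ->
     (forall v : 'cV[int]_n.+1, in_CXG Abar c parent (Phi Abar c parent n v)) /\
     injective (Phi Abar c parent n) /\
     (forall v : 'cV[int]_n.+1,
        Phi Abar c parent n.+1 (Abar n *m v) = Phi Abar c parent n v)) /\
  (forall (K : zmodType) (iota : forall n : nat, 'cV[int]_n.+1 -> K),
     (* K with the maps iota_n is the direct limit of (Z^{n+1}, phi_{n*}) *)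
     (forall n (u v : 'cV[int]_n.+1), iota n (u + v) = iota n u + iota n v) ->
     (forall n (v : 'cV[int]_n.+1), iota n.+1 (Abar n *m v) = iota n v) ->
     (forall k : K, exists n (v : 'cV[int]_n.+1), k = iota n v) ->
     (forall n (v : 'cV[int]_n.+1), iota n v = 0 ->
        exists k : nat, phi_iter Abar n k v = 0) ->
     exists Psi : K -> Xmin parent -> rat,
       (forall a b x, Psi (a + b) x = Psi a x + Psi b x) /\
       injective Psi /\
       (forall a, in_CXG Abar c parent (Psi a)) /\
       (forall n : nat, (1 <= n)%N -> forall v : 'cV[int]_n.+1,
          Psi (iota n v) = Phi Abar c parent n v) /\
       Psi (iota 0%N (const_mx 1)) = (fun _ => 1)).

Proof.
have part1 : forall n : nat, (1 <= n)%N ->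
     (forall v : 'cV[int]_n.+1, in_CXG Abar c parent (Phi Abar c parent n v)) /\
     injective (Phi Abar c parent n) /\
     (forall v : 'cV[int]_n.+1,
        Phi Abar c parent n.+1 (Abar n *m v) = Phi Abar c parent n v).
  move=> n hn; split; [|split].
  - move=> v; split; first by move=> x; exact: Phi_G.
    by move=> x; exists n => y; exact: Phi_loc.
  - exact: Phi_inj.
  - by move=> v; apply: functional_extensionality => x; exact: Phi_step.
split => //.
move=> K iota iadd istep isurj iker.
have iiter : forall n k v, iota (k + n)%N (phi_iter Abar n k v) = iota n v.
  move=> n k v; elim: k => //= k IH.
  by rewrite -IH -(istep (k + n)%N).
have phiiter : forall n k v x, Phi Abar c parent (k + n)%N (phi_iter Abar n k v) x = Phi Abar c parent n v x.
  move=> n k v x; elim: k => //= k IH.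
  by rewrite -IH -(Phi_step Abar c parent Hinv (k + n)%N).
have lift : forall n (v : 'cV[int]_n.+1) N, (n <= N)%N -> exists w : 'cV[int]_N.+1,
    iota N w = iota n v /\ forall x, Phi Abar c parent N w x = Phi Abar c parent n v x.
  move=> n v N h; rewrite -(subnK h).
  exists (phi_iter Abar n (N - n) v); split; [exact: iiter | move=> x; exact: phiiter].
have iopp : forall N (u v : 'cV[int]_N.+1), iota N (u - v) = iota N u - iota N v.
  by move=> N u v; apply: (addIr (iota N v)); rewrite -iadd !subrK.
have welldef : forall n v m w, iota n v = iota m w -> forall x,
    Phi Abar c parent n v x = Phi Abar c parent m w x.
  move=> n v m w e x.
  have [v' [iv pv]] := lift n v (n + m)%N (leq_addr m n).
  have [w' [iw pw]] := lift m w (n + m)%N (leq_addl n m).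
  rewrite -pv -pw.
  have : iota (n + m)%N (v' - w') = 0 by rewrite iopp iv iw e subrr.
  move/iker => [k hk].
  apply/eqP; rewrite -subr_eq0 -Phi_sub -(phiiter _ k) hk.
  by rewrite Phi0.
have rep : forall a : K, {n : nat & {v : 'cV[int]_n.+1 | a = iota n v}}.
  move=> a; have [n hn] := constructive_indefinite_description _ (isurj a).
  have [v hv] := constructive_indefinite_description _ hn.
  by exists n, v.
pose Psi a := Phi Abar c parent (projT1 (rep a)) (proj1_sig (projT2 (rep a))).
have PsiE : forall n v x, Psi (iota n v) x = Phi Abar c parent n v x.
  move=> n v x; rewrite /Psi; case: (rep (iota n v)) => m [w e] /=.
  exact: (welldef m w n v (esym e)).
have PsiF : forall n v, Psi (iota n v) = Phi Abar c parent n v.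
  by move=> n v; apply: functional_extensionality => x; exact: PsiE.
have common : forall a b : K, exists N (v w : 'cV[int]_N.+1),
    [/\ (1 <= N)%N, a = iota N v & b = iota N w].
  move=> a b; have [n [v ea]] := isurj a; have [m [w eb]] := isurj b.
  have [v' [iv _]] := lift n v (n + m).+1 (leqW (leq_addr m n)).
  have [w' [iw _]] := lift m w (n + m).+1 (leqW (leq_addl n m)).
  by exists (n + m).+1, v', w'; split => //; rewrite ?iv ?iw.
exists Psi; split; [|split; [|split; [|split]]].
- move=> a b x; have [N [v [w [hN -> ->]]]] := common a b.
  by rewrite -iadd !PsiE Phi_add.
- move=> a b e; have [N [v [w [hN ea eb]]]] := common a b.
  rewrite ea eb; congr (iota N _); apply: (Phi_inj Abar c parent Hemit Hinv N).
  by rewrite -!PsiF -ea -eb e.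
- move=> a; have [N [v [_ [hN -> _]]]] := common a a.
  by rewrite PsiF; case: (part1 N hN).
- by move=> n hn v; rewrite PsiF.
- rewrite PsiF; apply: functional_extensionality => x.
  rewrite /Phi big_ord1 /= mul1mx mxE mxE /chiB /=.
  by rewrite [pth _ _ 0%N]ord1 eqxx mulr1.
Qed.
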